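(* Let $X$ be a $W$-space (for example, a realcompact space). Then the strong dual of $C_k(X)$ has a fundamental bounded resolution if and only if $X$ has a fundamental compact resolution.
   Context: $C_k(X)$ is the space of continuous real-valued functions on the Tychonoff space $X$ with the compact-open topology; its strong dual carries the topology of uniform convergence on bounded subsets of $C_k(X)$. A subset $A\subseteq X$ is $b$-bounding if for every bounded subset $B$ of $C_k(X)$, $\sup\{|f(x)|:x\in A,f\in B\}<\infty$; $X$ is a $W$-space if every $b$-bounding subset of $X$ is relatively compact. Order $\mathbb{N}^{\mathbb{N}}$ pointwise. A resolution is a family $\{A_\alpha:\alpha\in\mathbb{N}^{\mathbb{N}}\}$ covering the space with $A_\alpha\subseteq A_\beta$ for $\alpha\le\beta$. A fundamental compact resolution of $X$ is a resolution of compact sets such that every compact subset of $X$ lies in some member; a fundamental bounded resolution of a locally convex space is a resolution of bounded sets such that every bounded set lies in some member. *)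

(* Defs.v *)
From HB Require Import structures.
From mathcomp Require Import all_boot all_order all_algebra.
From mathcomp Require Import all_classical all_reals all_analysis.
Set Implicit Arguments. Unset Strict Implicit. Unset Printing Implicit Defensive.
Import Order.TTheory GRing.Theory Num.Theory.
Local Open Scope classical_set_scope.
Local Open Scope ring_scope.

Section Defs.
Variables (R : realType) (X : topologicalType).

Definition tychonoff_space : Prop :=
  completely_regular_space X /\ hausdorff_space X.

Definition Cfun : set (X -> R) := [set f : X -> R | continuous (f : X -> R^o)].

(* Bounded subsets of C_k(X): the compact-open topology on C(X) is the
   locally convex topology of the seminorms p_K(f) = sup_{x in K} |f x|,
   K compact; a set is bounded iff every p_K is bounded on it. *)
Definition Ck_bounded (B : set (X -> R)) : Prop :=
  B `<=` Cfun /\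
  forall K : set X, compact K ->
    exists M : R, forall f x, B f -> K x -> `|f x| <= M.

Definition b_bounding (A : set X) : Prop :=
  forall B : set (X -> R), Ck_bounded B ->
    exists M : R, forall f x, B f -> A x -> `|f x| <= M.

Definition W_space : Prop :=
  forall A : set X, b_bounding A -> compact (closure A).

(* A functional
   is represented by phi : (X -> R) -> R, normalised to be 0 outside C(X)
   (so each functional has exactly one representative).  Continuity of a
   linear functional: phi is bounded on a basic 0-neighbourhood
   {f in C(X) | forall x in K, |f x| <= eps} of the compact-open topology. *)
Definition Ck_dual : set ((X -> R) -> R) :=
  [set phi |
    (forall f g, Cfun f -> Cfun g -> phi (f \+ g) = phi f + phi g) /\
    (forall (a : R) f, Cfun f -> phi (fun x => a * f x) = a * phi f) /\
    (forall f, ~ Cfun f -> phi f = 0) /\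
    (exists K : set X, compact K /\ exists2 eps : R, 0 < eps &
       forall f, Cfun f -> (forall x, K x -> `|f x| <= eps) -> `|phi f| <= 1)].

(* Bounded subsets of the strong dual (topology of uniform convergence on
   bounded subsets of C_k(X), given by the seminorms
   q_B(phi) = sup_{f in B} |phi f|, B bounded). *)
Definition strong_dual_bounded (A : set ((X -> R) -> R)) : Prop :=
  A `<=` Ck_dual /\
  forall B : set (X -> R), Ck_bounded B ->
    exists M : R, forall phi f, A phi -> B f -> `|phi f| <= M.

End Defs.

Definition baire_le (a b : nat -> nat) : Prop := forall n, (a n <= b n)%N.

Definition resolution {T : Type} (S : set T) (F : (nat -> nat) -> set T) : Prop :=
  (forall a, F a `<=` S) /\
  (forall a b, baire_le a b -> F a `<=` F b) /\
  (forall t, S t -> exists a, F a t).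

Definition fundamental_compact_resolution (X : topologicalType) : Prop :=
  exists K : (nat -> nat) -> set X,
    resolution setT K /\ (forall a, compact (K a)) /\
    (forall C : set X, compact C -> exists a, C `<=` K a).

Definition strong_dual_fundamental_bounded_resolution
    (R : realType) (X : topologicalType) : Prop :=
  exists A : (nat -> nat) -> set ((X -> R) -> R),
    resolution (@Ck_dual R X) A /\
    (forall a, strong_dual_bounded (A a)) /\
    (forall B, strong_dual_bounded B -> exists a, B `<=` A a).

(* Main.v *)
Require Import Defs.
From HB Require Import structures.
From mathcomp Require Import all_boot all_order all_algebra.
From mathcomp Require Import all_classical all_reals all_analysis.
From mathcomp Require Import lra.
Set Implicit Arguments. Unset Strict Implicit. Unset Printing Implicit Defensive.
Import Order.TTheory GRing.Theory Num.Theory.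
Local Open Scope classical_set_scope.
Local Open Scope ring_scope.

Section Aux.
Variables (R : realType) (X : topologicalType).
Local Notation C := (@Cfun R X).

Lemma Cadd f g : C f -> C g -> C (f \+ g).
Proof. by move=> hf hg x; apply: continuousD; [exact: hf|exact: hg]. Qed.

Lemma Cmul f g : C f -> C g -> C (fun x => f x * g x).
Proof. by move=> hf hg x; apply: (@continuousM R X f g); [exact: hf|exact: hg]. Qed.

Lemma Ccst c : C (fun _ => c).
Proof. by move=> x; apply: cvg_cst. Qed.

Lemma Cscale a f : C f -> C (fun x => a * f x).
Proof. by move=> hf; apply: Cmul => //; apply: Ccst. Qed.

Lemma Cmax f g : C f -> C g -> C (fun x => Num.max (f x) (g x)).
Proof. by move=> hf hg x; apply: (@continuous_max R X f g); [exact: hf|exact: hg]. Qed.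

Lemma Cmin f g : C f -> C g -> C (fun x => Num.min (f x) (g x)).
Proof. by move=> hf hg x; apply: (@continuous_min R X f g); [exact: hf|exact: hg]. Qed.

Lemma Cinv f : C f -> (forall x, f x != 0) -> C (fun x => (f x)^-1).
Proof. by move=> hf h0 x; apply: (@continuousV R X f) => //; exact: hf. Qed.

Lemma Cnorm f : C f -> C (fun x => `|f x|).
Proof.
move=> hf x; apply: cvg_norm; exact: hf.
Qed.

Lemma Cbound f K : C f -> compact K -> exists M, forall y, K y -> `|f y| <= M.
Proof.
move=> hf cK.
have : compact ((f : X -> R^o) @` K).
  apply: continuous_compact => //; apply: continuous_subspaceT; exact: hf.
move=> /compact_bounded [M [_ HM]].
exists (M + 1) => y Ky.
have := HM (M + 1); rewrite ltrDl ltr01 => /(_ isT (f y)).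
by apply; exists y.
Qed.


Local Notation D := (@Ck_dual R X).

Lemma dual_add phi f g : D phi -> C f -> C g -> phi (f \+ g) = phi f + phi g.
Proof. by case=> h _; apply: h. Qed.

Lemma dual_scale phi a f : D phi -> C f -> phi (fun x => a * f x) = a * phi f.
Proof. by case=> _ [h _]; apply: h. Qed.

Lemma dual_zero phi : D phi -> phi (fun _ => 0) = 0.
Proof.
move=> hD; have := @dual_scale phi 0 _ hD (Ccst (c:=0)).
by move=> H; rewrite mul0r [0 * _]mul0r in H.
Qed.

Lemma dual_sub phi f g : D phi -> C f -> C g ->
  phi (fun x => f x - g x) = phi f - phi g.
Proof.
move=> hD hf hg.
have -> : (fun x => f x - g x) = f \+ (fun x => -1 * g x).
  by apply: funext => x /=; rewrite mulN1r.
by rewrite dual_add ?dual_scale ?mulN1r //; exact: Cscale.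
Qed.

Lemma dual_carrier phi (K : set X) (eps : R) : D phi -> 0 < eps ->
  (forall f, C f -> (forall x, K x -> `|f x| <= eps) -> `|phi f| <= 1) ->
  forall f, C f -> (forall x, K x -> f x = 0) -> phi f = 0.
Proof.
move=> hD eps0 hK f hf f0.
apply/eqP; apply: contraT => nz.
have := hK (fun x => (2 / `|phi f|) * f x) (Cscale hf).
rewrite dual_scale // normrM ger0_norm ?divr_ge0 // mulfVK ?normr_eq0 //.
have -> : (2 : R) <= 1 = false by apply/negbTE; rewrite -ltNge ltr1n.
move=> /(_ _) H; suff : false by [].
by apply: H => x Kx; rewrite f0 // mulr0 normr0 ltW.
Qed.

Definition delta (x : X) : (X -> R) -> R :=
  fun f => if `[< C f >] then f x else 0.

Lemma delta_C x f : C f -> delta x f = f x.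
Proof. by move=> hf; rewrite /delta; case: asboolP. Qed.

Lemma delta_dual x : D (delta x).
Proof.
split; [|split; [|split]].
- by move=> f g hf hg; rewrite !delta_C //; exact: Cadd.
- by move=> a f hf; rewrite !delta_C //; exact: Cscale.
- by move=> f nf; rewrite /delta; case: asboolP.
- exists [set x]; split; first exact: compact_set1.
  exists 1 => // f hf H; rewrite delta_C //; exact: H.
Qed.

End Aux.

Lemma forward (R : realType) (X : topologicalType) :
  W_space R X -> strong_dual_fundamental_bounded_resolution R X ->
  fundamental_compact_resolution X.
Proof.
move=> hW [A [[Asub [Amono Acov]] [Abd Afund]]].
exists (fun a => closure [set x | A a (@delta R X x)]).
split; [split; [|split]|split].
- by [].
- move=> a b ab; apply: closureS => x /=; exact: Amono.
- move=> t _; have [a Ha] := Acov _ (@delta_dual R X t).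
  by exists a; apply: subset_closure.
- move=> a; apply: hW => B Bbd.
  have [M HM] := (Abd a).2 B Bbd.
  exists M => f x Bf Ax; rewrite -(delta_C x (Bbd.1 _ Bf)); exact: HM.
- move=> K cK.
  have Sbd : strong_dual_bounded [set phi | exists2 x, K x & phi = @delta R X x].
    split; first by move=> _ [x _ ->]; exact: delta_dual.
    move=> B [BC BK]; have [M HM] := BK K cK.
    by exists M => _ f [x Kx ->] Bf; rewrite delta_C ?HM //; exact: BC.
  have [a Ha] := Afund _ Sbd.
  by exists a => x Kx; apply: subset_closure; apply: Ha; exists x.
Qed.

Section Equi.
Variables (R : realType) (X : topologicalType).
Local Notation C := (@Cfun R X).

Lemma finmax (c : nat -> R) N : exists M, forall n, (n < N)%N -> c n <= M.
Proof.
elim: N => [|N [M HM]]; first by exists 0.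
exists (Num.max M (c N)) => n; rewrite ltnS leq_eqVlt => /orP[/eqP->|/HM h].
  by rewrite le_max lexx orbT.
by rewrite le_max h.
Qed.

Lemma cpt_pos (P : (X -> R) -> Prop) (K : set X) :
  (forall g, P g -> C g) -> P (fun _ => 0) ->
  (forall f g, P f -> P g -> P (f \+ g)) ->
  (forall g k, P g -> C k -> P (fun x => g x * k x)) ->
  compact K -> (forall y, K y -> exists g, P g /\ g y != 0) ->
  exists G, [/\ P G, (forall x, 0 <= G x) & (forall y, K y -> 1 < G y)].
Proof.
move=> PC P0 PD PM cK hK; apply: contrapT => nG.
pose Ds := [set G | P G /\ forall x, 0 <= G x].
pose Bf := fun G : X -> R => K `&` [set y | G y <= 1].
have Bne : forall G, Ds G -> Bf G !=set0.
  move=> G [PG G0]; apply: contrapT => ne; apply: nG; exists G; split => // y Ky.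
  rewrite ltNge; apply/negP => le; apply: ne; by exists y.
have FF : Filter (filter_from Ds Bf).
  apply: filter_from_filter; first by exists (fun _ => 0); split.
  move=> G1 G2 [P1 n1] [P2 n2]; exists (G1 \+ G2).
    by split; [exact: PD|move=> x; apply: addr_ge0].
  move=> y [Ky /= le]; split; split => //.
    by apply: le_trans le; rewrite lerDl.
  by apply: le_trans le; rewrite lerDr.
have PF : ProperFilter (filter_from Ds Bf) by apply: filter_from_proper.
have FK : filter_from Ds Bf K.
  by exists (fun _ => 0); [split|move=> y []].
have [y [Ky cly]] := cK _ PF FK.
have [g [Pg gy]] := hK y Ky.
pose c := 2 / (g y ^+ 2).
have c0 : 0 < c by rewrite divr_gt0 // exprn_even_gt0 //.
pose G := fun x => g x * (c * g x).
have PG : P G by apply: PM => //; apply: Cscale; exact: PC.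
have G0 : forall x, 0 <= G x.
  by move=> x; rewrite /G mulrCA -expr2; apply: mulr_ge0; [exact: ltW|exact: sqr_ge0].
have Gy : G y = 2 by rewrite /G mulrCA -expr2 /c divfK // expf_neq0.
have FG : filter_from Ds Bf (Bf G) by exists G.
have NG : nbhs y [set x | 1 < G x].
  apply: (@open_nbhs_nbhs _ y [set x | 1 < G x]); split; last by rewrite /= Gy ltr1n.
  have hG : C G by apply: Cmul; [exact: PC|apply: Cscale; exact: PC].
  exact: ((continuousP (G : X -> R^o)).1 hG _ (@open_gt R 1)).
have [x [[_ /= le] /= lt]] := cly _ _ FG NG.
by move: lt; rewrite ltNge le.
Qed.


Lemma Csub f g : C f -> C g -> C (fun x => f x - g x).
Proof.
move=> hf hg; have := Cadd hf (Cscale (a := -1) hg).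
by congr C; apply: funext => x /=; rewrite mulN1r.
Qed.

Lemma equicont (crs : completely_regular_space X) (hW : W_space R X)
  (A : set ((X -> R) -> R)) : strong_dual_bounded A ->
  exists K : set X, compact K /\ exists c : R, forall phi f d, A phi -> C f ->
    0 < d -> (forall x, K x -> `|f x| <= d) -> `|phi f| <= c * d.
Proof.
move=> [Adual Abd].
pose Id := fun g : X -> R =>
  C g /\ forall psi h, A psi -> C h -> psi (fun x => g x * h x) = 0.
have IdC : forall g, Id g -> C g by move=> g [].
have Id0 : Id (fun _ => 0).
  split; first exact: Ccst.
  move=> psi h Apsi hh; rewrite -[RHS](dual_zero (Adual _ Apsi)); congr psi.
  by apply: funext => x; rewrite mul0r.
have IdD : forall f g, Id f -> Id g -> Id (f \+ g).
  move=> f g [Cf Hf] [Cg Hg]; split; first exact: Cadd.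
  move=> psi h Apsi hh.
  have -> : (fun x => (f \+ g) x * h x) =
            (fun x => f x * h x) \+ (fun x => g x * h x).
    by apply: funext => x /=; rewrite mulrDl.
  by rewrite dual_add ?Hf ?Hg ?addr0 //; [exact: Adual|exact: Cmul|exact: Cmul].
have IdM : forall g k, Id g -> C k -> Id (fun x => g x * k x).
  move=> g k [Cg Hg] Ck; split; first exact: Cmul.
  move=> psi h Apsi hh.
  have -> : (fun x => g x * k x * h x) = (fun x => g x * (k x * h x)).
    by apply: funext => x; rewrite mulrA.
  by apply: Hg => //; exact: Cmul.
pose S := [set x | forall g, Id g -> g x = 0].
have Sbb : b_bounding R S.
  move=> B [BC Bbd]; apply: contrapT => nM.
  have H1 : forall n : nat, exists bx : (X -> R) * X,
      [/\ B bx.1, S bx.2 & n%:R < `|bx.1 bx.2|].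
    move=> n; apply: contrapT => nex; apply: nM; exists n%:R => f x Bf Sx.
    rewrite leNgt; apply/negP => lt; apply: nex; by exists (f, x).
  have [bx Hbx] := choice H1.
  pose V := fun n : nat => [set y | n%:R < `|(bx n).1 y|].
  have H2 : forall n, exists ph : ((X -> R) -> R) * (X -> R),
      [/\ A ph.1, C ph.2, (forall y, ~ V n y -> ph.2 y = 0) & ph.1 ph.2 != 0].
    move=> n; have [Bn Sn ltn] := Hbx n.
    have Cb := BC _ Bn.
    have oV : open (V n).
      exact: ((continuousP (fun y => `|(bx n).1 y| : R^o)).1 (Cnorm Cb) _
               (@open_gt R n%:R)).
    have : uniform_separator [set (bx n).2] (~` V n).
      apply: crs; first exact: open_closedC.
      by move=> h; exact: h ltn.
    move=> /(@uniform_separatorP X R) [u [cu _ u0 u1]].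
    pose v := fun y => 1 - u y.
    have Cv : C v by apply: Csub; [exact: Ccst|exact: cu].
    have ux : u (bx n).2 = 0 by apply: u0; exists (bx n).2.
    apply: contrapT => nex.
    have : v (bx n).2 = 0.
      apply: Sn; split => // psi h Apsi Ch; apply: contrapT => ne; apply: nex.
      exists (psi, fun y => v y * h y); split => //=.
      - exact: Cmul.
      - move=> y nVy; rewrite /v (_ : u y = 1) ?subrr ?mul0r //.
        by apply: u1; exists y.
      - exact/eqP.
    by rewrite /v ux subr0 => /eqP; rewrite oner_eq0.
  have [ph Hph] := choice H2.
  pose t := fun n : nat => n%:R / `|(ph n).1 (ph n).2|.
  pose g := fun n y => t n * (ph n).2 y.
  have Hbd : Ck_bounded (range g).
    split; first by move=> _ [n _ <-]; apply: Cscale; have [] := Hph n.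
    move=> K cK; have [MK HMK] := Bbd K cK.
    pose N := (Num.truncn MK).+1.
    have hN : MK < N%:R := truncnS_gt MK.
    have Hc : forall n, exists c, forall y, K y -> `|g n y| <= c.
      move=> n; apply: Cbound => //; apply: Cscale; by case: (Hph n).
    have [c Hc'] := choice Hc.
    have [Cm HCm] := finmax c N.
    exists (Num.max Cm 0) => _ y [n _ <-] Ky.
    have [lt|ge] := ltnP n N.
      apply: le_trans (Hc' n y Ky) _; apply: le_trans (HCm n lt) _.
      by rewrite le_max lexx.
    have [_ _ z _] := Hph n.
    rewrite /g z ?mulr0 ?normr0 ?le_max ?lexx ?orbT //.
    rewrite /V /= => lt.
    have [Bn _ _] := Hbx n.
    have := HMK _ _ Bn Ky => le.
    have : N%:R <= n%:R :> R by rewrite ler_nat.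
    have := lt_le_trans lt le.
    move=> a b; have := lt_trans a hN; rewrite ltNge b //.
  have [M0 HM0] := Abd _ Hbd.
  pose n := (Num.truncn M0).+1.
  have [Apn Cpn _ pn] := Hph n.
  have rg : range g (g n) by exists n.
  have := HM0 _ _ Apn rg.
  rewrite /g dual_scale; [|exact: Adual|exact: Cpn].
  rewrite normrM /t ger0_norm ?divr_ge0 // divfK ?normr_eq0 //.
  by move=> le; have := truncnS_gt M0; rewrite -/n ltNge le.
have cK := hW _ Sbb.
exists (closure S); split => //.
have L : forall phi F (W : set X), A phi -> C F -> open W ->
    closure S `<=` W -> (forall x, W x -> F x = 0) -> phi F = 0.
  move=> phi F W Aphi CF oW KW FW.
  have hD := Adual _ Aphi.
  have [_ [_ [_ [K0 [cK0 [eps eps0 Heps]]]]]] := hD.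
  have cD : compact (K0 `&` ~` W).
    by apply: compact_closedI => //; exact: open_closedC.
  have [|G [IG G0 G1]] := cpt_pos IdC Id0 IdD IdM cD.
    move=> y [_ nWy]; apply: contrapT => ne.
    apply: nWy; apply: KW; apply: subset_closure => g Ig.
    apply: contrapT => gy; apply: ne; exists g; split => //; exact/eqP.
  pose k := fun x => F x * (Num.max (G x) 1)^-1.
  have Ck : C k.
    apply: Cmul => //; apply: Cinv; first by apply: Cmax; [exact: IdC|exact: Ccst].
    by move=> x; rewrite gt_eqF // lt_max ltr01 orbT.
  have CGk : C (fun x => G x * k x) by apply: Cmul => //; exact: IdC.
  have -> : phi F = phi ((fun x => F x - G x * k x) \+ (fun x => G x * k x)).
    by congr phi; apply: funext => x /=; rewrite subrK.
  rewrite dual_add //; last exact: Csub.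
  rewrite (IG.2 phi k Aphi Ck) addr0.
  apply: (dual_carrier hD eps0 Heps); first exact: Csub.
  move=> x K0x; have [Wx|nWx] := pselect (W x).
    by rewrite /k FW // mul0r mulr0 subr0.
  have lt := G1 x (conj K0x nWx).
  rewrite /k max_l ?ltW // mulrCA mulfV ?mulr1 ?subrr // gt_eqF //.
  exact: lt_trans ltr01 lt.
have B1bd : Ck_bounded [set g | C g /\ forall x, `|g x| <= 1].
  split; first by move=> g [].
  by move=> K _; exists 1 => f x [_ H] _; exact: H.
have [M0 HM0] := Abd _ B1bd.
exists (2 * M0) => phi f d Aphi Cf d0 fK.
have hD := Adual _ Aphi.
pose g := fun x => Num.max (- (2 * d)) (Num.min (2 * d) (f x)).
have Cg : C g by apply: Cmax; [exact: Ccst|apply: Cmin; [exact: Ccst|exact: Cf]].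
have h2d : - (2 * d) <= 2 * d by lra.
have gb : forall x, `|g x| <= 2 * d.
  move=> x; rewrite ler_norml le_max lexx /= ge_max ge_min lexx /= andbT.
  exact: h2d.
pose W := [set x | `|f x| < 2 * d].
have oW : open W.
  exact: ((continuousP (fun x => `|f x| : R^o)).1 (Cnorm Cf) _ (@open_lt R (2 * d))).
have KW : closure S `<=` W.
  by move=> x Kx; rewrite /W /=; apply: le_lt_trans (fK x Kx) _; lra.
have eqfg : phi f = phi g.
  apply/eqP; rewrite -subr_eq0 -dual_sub //; apply/eqP.
  apply: (L _ _ W) => //; first exact: Csub.
  move=> x; rewrite /W /= ltr_norml => /andP[l1 l2].
  by rewrite /g min_r ?ltW // max_r ?ltW // subrr.
have d2 : 2 * d != 0 by rewrite gt_eqF //; lra.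
have hb : `|phi (fun x => (2 * d)^-1 * g x)| <= M0.
  apply: HM0 => //; split; first exact: Cscale.
  move=> x; rewrite normrM ger0_norm ?invr_ge0; last by lra.
  rewrite -[X in _ <= X](mulVf d2); apply: ler_wpM2l; [rewrite invr_ge0; lra|exact: gb].
rewrite eqfg (_ : g = fun x => (2 * d) * ((2 * d)^-1 * g x)); last first.
  by apply: funext => x; rewrite mulVKf.
rewrite dual_scale //; last exact: Cscale.
rewrite normrM ger0_norm; last by lra.
rewrite (_ : 2 * M0 * d = 2 * d * M0); last by rewrite mulrAC.
by apply: ler_wpM2l => //; lra.
Qed.

End Equi.

Lemma backward (R : realType) (X : topologicalType) :
  completely_regular_space X -> W_space R X ->
  fundamental_compact_resolution X ->
  strong_dual_fundamental_bounded_resolution R X.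
Proof.
move=> crs hW [K [[_ [Kmono _]] [Kc Kfund]]].
pose sh := fun (a : nat -> nat) n => a n.+1.
pose A := fun a => [set phi : (X -> R) -> R | Ck_dual phi /\
  forall f M, Cfun f -> 0 < M -> (forall x, K (sh a) x -> `|f x| <= M) ->
    `|phi f| <= (a 0%N).+1%:R * M].
exists A; split; [split; [|split]|split].
- by move=> a phi [].
- move=> a b ab phi [Dphi H]; split => // f M Cf M0 hb.
  apply: le_trans (H f M Cf M0 _) _.
    move=> x Kx; apply: hb; apply: (Kmono (sh a)) => //; move=> n; exact: ab.
  apply: ler_wpM2r; first exact: ltW.
  by rewrite ler_nat ltnS; exact: ab.
- move=> phi Dphi; have [_ [_ [_ [K0 [cK0 [eps eps0 He]]]]]] := Dphi.
  have [g Hg] := Kfund _ cK0.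
  pose N := Num.truncn (eps^-1).
  exists (fun n => if n is n'.+1 then g n' else N); split => // f M Cf M0 hb.
  have : `|phi (fun x => (eps / M) * f x)| <= 1.
    apply: He; first exact: Cscale.
    have eM : 0 <= eps / M by rewrite divr_ge0 // ltW.
    move=> x K0x; rewrite normrM (ger0_norm eM).
    rewrite -[Y in _ <= Y](divfK (x := M) (lt0r_neq0 M0)).
    apply: ler_wpM2l; first by rewrite divr_ge0 // ltW.
    exact: hb (Hg x K0x).
  have eM : 0 <= eps / M by rewrite divr_ge0 // ltW.
  rewrite dual_scale // normrM (ger0_norm eM) => h.
  have h2 : eps * `|phi f| <= M.
    have := ler_wpM2r (ltW M0) h.
    by rewrite mul1r mulrAC divfK // gt_eqF.
  have e1 : eps^-1 < N.+1%:R := truncnS_gt _.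
  rewrite -(mulKf (lt0r_neq0 eps0) `|phi f|).
  apply: (@le_trans _ _ (eps^-1 * M)).
    by apply: ler_wpM2l => //; rewrite invr_ge0 ltW.
  by apply: ler_wpM2r; [exact: ltW|exact: ltW].
- move=> a; split; first by move=> phi [].
  move=> B [BC Bbd]; have [MB HMB] := Bbd _ (Kc (sh a)).
  exists ((a 0%N).+1%:R * Num.max MB 1) => phi f [Dphi H] Bf.
  apply: H; [exact: BC|by rewrite lt_max ltr01 orbT|].
  by move=> x Kx; rewrite le_max HMB.
- move=> B Bbd; have [K0 [cK0 [c Hc]]] := equicont crs hW Bbd.
  have [g Hg] := Kfund _ cK0.
  exists (fun n => if n is n'.+1 then g n' else Num.truncn c) => phi Bphi.
  split; first exact: Bbd.1.
  move=> f M Cf M0 hb; apply: le_trans (Hc phi f M Bphi Cf M0 _) _.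
    by move=> x K0x; apply: hb; exact: Hg.
  by apply: ler_wpM2r; [exact: ltW|exact: ltW (truncnS_gt c)].
Qed.

Theorem corollary2p10 (R : realType) (X : topologicalType) :
  tychonoff_space X -> W_space R X ->
  (strong_dual_fundamental_bounded_resolution R X <->
   fundamental_compact_resolution X).
Proof.
move=> [crs _] hW; split; first exact: forward.
exact: backward.
Qed.
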